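(* Let $S_X,S_Y$ be finite nonempty action sets, $\lambda\in[0,1)$, and let $\varphi:S_X\times S_Y\to\mathbb{R}$ be additive. If $\varphi\equiv0$ is $\lambda$-enforceable by $X$, then $\varphi\equiv0$ is $\lambda$-enforceable by $X$ using a reactive strategy, i.e., there exist $\sigma_X^0\in\Delta(S_X)$ and $\sigma_X:S_Y\to\Delta(S_X)$ such that the reactive strategy $(\sigma_X^0,\sigma_X)$ is $(\varphi,\lambda)$-autocratic.
   Context: Two players $X,Y$ play a repeated game with finite action sets $S_X,S_Y$; $\Delta(S)$ denotes the probability distributions on $S$. $\varphi$ is additive if there are $\phi_X:S_X\to\mathbb{R}$ and $\phi_Y:S_Y\to\mathbb{R}$ with $\varphi(s_X,s_Y)=\phi_X(s_X)+\phi_Y(s_Y)$ for all $s_X,s_Y$. Histories: $\mathcal{H}=\bigcup_{T\ge0}(S_X\times S_Y)^T$. A behavioral strategy for $X$ is a map $\sigma_X:\mathcal{H}\to\Delta(S_X)$, similarly for $Y$; in each round $t$ players independently draw actions from their strategies evaluated at the history of realized action pairs of rounds $0,\dots,t-1$, and $\mathbb{E}_{\sigma_X,\sigma_Y}$ is the expectation over the resulting play. For $\lambda\in[0,1)$, $\sigma_X$ is $(\varphi,\lambda)$-autocratic if for every behavioral strategy $\sigma_Y$ of $Y$, $\mathbb{E}_{\sigma_X,\sigma_Y}\big[(1-\lambda)\sum_{t\ge0}\lambda^t\varphi(s_X^t,s_Y^t)\big]=0$; $\varphi\equiv0$ is $\lambda$-enforceable by $X$ if a $(\varphi,\lambda)$-autocratic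 behavioral strategy for $X$ exists. A reactive strategy $(\sigma_X^0,\sigma_X)$ with $\sigma_X^0\in\Delta(S_X)$, $\sigma_X:S_Y\to\Delta(S_X)$ plays the mixed action $\sigma_X^0$ in round $0$ and $\sigma_X[s_Y^t]$ in round $t+1$, where $s_Y^t$ is $Y$'s realized action in round $t$. *)

(* Defs.v *)
From HB Require Import structures.
From mathcomp Require Import all_boot all_order all_algebra.
From mathcomp Require Import all_classical all_reals.
From mathcomp Require Import all_analysis.
Set Implicit Arguments. Unset Strict Implicit. Unset Printing Implicit Defensive.
Import Order.TTheory GRing.Theory Num.Theory numFieldNormedType.Exports.
Local Open Scope classical_set_scope.
Local Open Scope ring_scope.

Section RepeatedGame.
Variables (R : realType) (SX SY : finType).

Definition is_dist (S : finType) (p : S -> R) : Prop :=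
  (forall s, 0 <= p s) /\ \sum_(s : S) p s = 1.

(* Histories: finite sequences of realized action pairs, oldest first. *)
Definition hist := seq (SX * SY).

Definition stratX := hist -> SX -> R.
Definition stratY := hist -> SY -> R.
Definition is_stratX (s : stratX) : Prop := forall h, is_dist (s h).
Definition is_stratY (s : stratY) : Prop := forall h, is_dist (s h).

Definition hist_prob (sX : stratX) (sY : stratY) (t : nat)
  (h : t.-tuple (SX * SY)) : R :=
  \prod_(i < t) (sX (take i h) (tnth h i).1 * sY (take i h) (tnth h i).2).

Definition stage_exp (sX : stratX) (sY : stratY) (phi : SX -> SY -> R)
  (t : nat) : R :=
  \sum_(h : t.-tuple (SX * SY)) hist_prob sX sY h *
     \sum_(x : SX) \sum_(y : SY) sX h x * sY h y * phi x y.

(* Expected discounted payoff E[(1-lam) sum_t lam^t phi(s^t)]: since phi is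
   bounded, it is the sum of the series of expected discounted stage values. *)
Definition disc_term (sX : stratX) (sY : stratY) (phi : SX -> SY -> R)
  (lam : R) (t : nat) : R :=
  (1 - lam) * lam ^+ t * stage_exp sX sY phi t.

Definition autocratic (phi : SX -> SY -> R) (lam : R) (sX : stratX) : Prop :=
  forall sY : stratY, is_stratY sY ->
    series (disc_term sX sY phi lam) @ \oo --> (0 : R).

Definition enforceable (phi : SX -> SY -> R) (lam : R) : Prop :=
  exists sX : stratX, is_stratX sX /\ autocratic phi lam sX.

Definition additive_game (phi : SX -> SY -> R) : Prop :=
  exists (phiX : SX -> R) (phiY : SY -> R),
    forall x y, phi x y = phiX x + phiY y.

Definition reactive (s0 : SX -> R) (s : SY -> SX -> R) : stratX :=
  fun h => if h is p :: h' then s (last p h').2 else s0.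

End RepeatedGame.

(* Main.v *)
Require Import Defs.
Set Warnings "-all".
From mathcomp Require Import all_boot all_order all_algebra.
From mathcomp Require Import all_classical all_reals all_analysis.
From mathcomp Require Import ring lra.
Import Order.TTheory GRing.Theory Num.Theory numFieldNormedType.Exports.
Local Open Scope classical_set_scope.
Local Open Scope ring_scope.

Section Aux.
Variables (R : realType) (SX SY : finType).

Definition Et (sX : stratX R SX SY) (sY : stratY R SX SY) (t : nat)
  (F : (SX -> R) -> (SY -> R) -> R) : R :=
  \sum_(h : t.-tuple (SX * SY)) hist_prob sX sY h * F (sX h) (sY h).

Definition shX (q : SX * SY) (s : stratX R SX SY) : stratX R SX SY :=
  fun h => s (q :: h).
Definition shY (q : SX * SY) (s : stratY R SX SY) : stratY R SX SY :=
  fun h => s (q :: h).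

Lemma sum_tuple_cons (T : finType) n (G : (n.+1).-tuple T -> R) :
  \sum_(h : (n.+1).-tuple T) G h =
  \sum_(q : T) \sum_(h : n.-tuple T) G [tuple of q :: h].
Proof.
rewrite pair_big /=.
rewrite (reindex (fun p : T * n.-tuple T => [tuple of p.1 :: p.2])) //=.
exists (fun h : (n.+1).-tuple T => (thead h, [tuple of behead h])).
  by move=> [q h] _ /=; rewrite theadE; congr pair; apply: val_inj.
by move=> h _; rewrite [RHS]tuple_eta.
Qed.

Lemma hist_prob_cons sX sY t q (h : t.-tuple (SX * SY)) :
  hist_prob sX sY [tuple of q :: h] =
  sX [::] q.1 * sY [::] q.2 * hist_prob (shX q sX) (shY q sY) h.
Proof.
rewrite /hist_prob big_ord_recl /=.
congr (_ * _).
apply: eq_bigr => i _.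
by rewrite tnthS /shX /shY /=.
Qed.

Lemma Et0 sX sY F : Et sX sY 0 F = F (sX [::]) (sY [::]).
Proof.
rewrite /Et (big_pred1 [tuple]) => [|h]; last by rewrite (tuple0 h) /= eqxx.
by rewrite /hist_prob big_ord0 mul1r.
Qed.

Lemma EtS sX sY t F : Et sX sY t.+1 F =
  \sum_(q : SX * SY) sX [::] q.1 * sY [::] q.2 * Et (shX q sX) (shY q sY) t F.
Proof.
rewrite /Et sum_tuple_cons; apply: eq_bigr => q _.
rewrite big_distrr /=; apply: eq_bigr => h _.
by rewrite hist_prob_cons -!mulrA.
Qed.


Lemma wsum1 (p : SX -> R) (q : SY -> R) : is_dist p -> is_dist q ->
  \sum_(r : SX * SY) p r.1 * q r.2 = 1.
Proof.
move=> [_ hp] [_ hq]; rewrite -(pair_big predT predT (fun x y => p x * q y)) /=.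
rewrite -[RHS]hp; apply: eq_bigr => x _; by rewrite -big_distrr /= hq mulr1.
Qed.

Lemma wge0 (p : SX -> R) (q : SY -> R) r : is_dist p -> is_dist q ->
  0 <= p r.1 * q r.2.
Proof. by move=> [hp _] [hq _]; rewrite mulr_ge0. Qed.

Lemma convex_bound (I : finType) (w E : I -> R) lo hi :
  (forall r, 0 <= w r) -> \sum_r w r = 1 -> (forall r, lo <= E r <= hi) ->
  lo <= \sum_r w r * E r <= hi.
Proof.
move=> w0 w1 hE; apply/andP; split.
  rewrite -[lo]mul1r -w1 big_distrl /=; apply: ler_sum => r _.
  by rewrite ler_wpM2l // (andP (hE r)).1.
rewrite -[hi]mul1r -w1 big_distrl /=; apply: ler_sum => r _.
by rewrite ler_wpM2l // (andP (hE r)).2.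
Qed.

Lemma Et_bound t sX sY F lo hi : is_stratX sX -> is_stratY sY ->
  (forall h, lo <= F (sX h) (sY h) <= hi) -> lo <= Et sX sY t F <= hi.
Proof.
elim: t sX sY => [|t IH] sX sY hX hY hF; first by rewrite Et0.
rewrite EtS; apply: convex_bound.
- by move=> r; apply: wge0.
- exact: wsum1.
- move=> r; apply: IH => h; [exact: hX | exact: hY | exact: hF].
Qed.


Lemma geom_bound_cvg (lam C : R) (X : nat -> R) : 0 <= lam -> lam < 1 ->
  (forall n, `|X n| <= C) -> (fun n => lam ^+ n * X n) @ \oo --> (0 : R).
Proof.
move=> l0 l1 hX.
have hg : (fun n => lam ^+ n * C) @ \oo --> (0 : R).
  rewrite -(mul0r C); apply: cvgMr_tmp; apply: cvg_expr; rewrite ger0_norm //.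
apply: (@squeeze_cvgr _ _ _ _ (fun n => - (lam ^+ n * C)) (fun n => lam ^+ n * C)).
- near=> n; have:= hX n; rewrite ler_norml => /andP[a b]; rewrite -mulrN.
  by apply/andP; split; apply: ler_wpM2l; rewrite ?exprn_ge0.
- by rewrite -oppr0; apply: cvgN.
- exact: hg.
Unshelve. all: end_near.
Qed.

Lemma series_S (u : nat -> R) n : series u n.+1 = series u n + u n.
Proof. by rewrite /series /= big_nat_recr. Qed.

Lemma series_0 (u : nat -> R) : series u 0 = 0.
Proof. by rewrite /series /= big_geq. Qed.


Lemma lim_lower (lam : R) (u : nat -> R) (w c : R) : 0 <= lam -> lam < 1 ->
  series u @ \oo --> (0 : R) -> u 0%N = (1 - lam) * w ->
  (forall t, (1 - lam) * lam ^+ t.+1 * c <= u t.+1) ->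
  (1 - lam) * (w - c) + c <= 0.
Proof.
move=> l0 l1 hs u0 hu.
have key : forall N, (1 - lam) * (w - c) + c - lam ^+ N * (lam * c) <= series u N.+1.
  elim => [|N IH].
    rewrite series_S series_0 add0r u0 expr0 mul1r.
    have -> : (1 - lam) * (w - c) + c - lam * c = (1 - lam) * w by ring.
    by [].
  rewrite series_S; apply: le_trans (lerD IH (hu N)).
  have -> : (1 - lam) * (w - c) + c - lam ^+ N.+1 * (lam * c) =
    (1 - lam) * (w - c) + c - lam ^+ N * (lam * c) + (1 - lam) * lam ^+ N.+1 * c
    by rewrite !exprS; ring.
  by [].
have hf : (fun N => (1 - lam) * (w - c) + c - lam ^+ N * (lam * c)) @ \oo -->
   ((1 - lam) * (w - c) + c - 0).
  apply: cvgB; first exact: cvg_cst.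
  exact: (@geom_bound_cvg lam `|lam * c| (fun=> lam * c)).
have hg : (fun N => series u N.+1) @ \oo --> (0 : R).
  by rewrite (cvg_shiftS (series u)).
rewrite -[X in X <= _]subr0; apply: (ler_cvg_to hf hg).
by near=> N; exact: key.
Unshelve. all: end_near.
Qed.


Definition FA (phiX : SX -> R) : (SX -> R) -> (SY -> R) -> R :=
  fun p _ => \sum_x p x * phiX x.
Definition FB (phiY : SY -> R) : (SX -> R) -> (SY -> R) -> R :=
  fun _ q => \sum_y q y * phiY y.

Lemma inner_split (phiX : SX -> R) (phiY : SY -> R) p q : is_dist p -> is_dist q ->
  \sum_x \sum_y p x * q y * (phiX x + phiY y) =
  \sum_x p x * phiX x + \sum_y q y * phiY y.
Proof.
move=> [_ hp] [_ hq].
transitivity (\sum_x (p x * phiX x * \sum_y q y + p x * \sum_y q y * phiY y)).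
  apply: eq_bigr => x _; rewrite !big_distrr -big_split /=.
  by apply: eq_bigr => y _; ring.
rewrite big_split /= hq; congr (_ + _); first by apply: eq_bigr => x _; rewrite mulr1.
by rewrite -big_distrl /= hp mul1r.
Qed.

Lemma stage_split phiX phiY phi sX sY t : is_stratX sX -> is_stratY sY ->
  (forall x y, phi x y = phiX x + phiY y) ->
  stage_exp sX sY phi t = Et sX sY t (FA phiX) + Et sX sY t (FB phiY).
Proof.
move=> hX hY hphi; rewrite /stage_exp /Et -big_split; apply: eq_bigr => h _.
rewrite /= -mulrDr; congr (_ * _); rewrite -(@inner_split phiX phiY _ _ (hX h) (hY h)).
by apply: eq_bigr => x _; apply: eq_bigr => y _; rewrite hphi.
Qed.

Lemma delta_sum (y : SY) (f : SY -> R) : \sum_y' (y' == y)%:R * f y' = f y.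
Proof.
rewrite (bigD1 y) //= eqxx mul1r big1 ?addr0 // => y' /negbTE ->.
by rewrite mul0r.
Qed.

Lemma necessity (phiX : SX -> R) (phiY : SY -> R) (phi : SX -> SY -> R) (lam : R) (sX : stratX R SX SY) (a b : R) (y : SY) :
  0 <= lam -> lam < 1 -> (forall x y, phi x y = phiX x + phiY y) ->
  (forall x, a <= phiX x <= b) -> is_stratX sX -> autocratic phi lam sX ->
  (1 - lam) * (\sum_x sX [::] x * phiX x) + phiY y + lam * a <= 0 /\
  0 <= (1 - lam) * (\sum_x sX [::] x * phiX x) + phiY y + lam * b.
Proof.
move=> l0 l1 hphi hab hX aut.
set v0 := \sum_x sX [::] x * phiX x.
pose cY : stratY R SX SY := fun _ y' => (y' == y)%:R.
have hcY : is_stratY cY.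
  move=> h; split; first by move=> y'; rewrite /cY ler0n.
  by rewrite /cY -[RHS](delta_sum y (fun=> 1)); apply: eq_bigr => y' _; rewrite mulr1.
have hs := aut cY hcY.
have hB : forall t, Et sX cY t (FB phiY) = phiY y.
  move=> t; apply/esym/le_anti; apply: Et_bound => // h.
  by rewrite /FB /cY delta_sum lexx.
have hA : forall t, a <= Et sX cY t (FA phiX) <= b.
  move=> t; apply: Et_bound => // h; rewrite /FA.
  have [h0 h1] := hX h; exact: convex_bound.
have hA0 : Et sX cY 0 (FA phiX) = v0 by rewrite Et0.
have hu : forall t, disc_term sX cY phi lam t =
    (1 - lam) * lam ^+ t * (Et sX cY t (FA phiX) + phiY y).
  by move=> t; rewrite /disc_term (@stage_split phiX phiY phi sX cY t hX hcY hphi) hB.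
have hpos : forall t, 0 <= (1 - lam) * lam ^+ t.
  by move=> t; rewrite mulr_ge0 ?exprn_ge0 // subr_ge0 ltW.
split.
  have := @lim_lower lam (disc_term sX cY phi lam) (v0 + phiY y) (a + phiY y)
    l0 l1 hs.
  rewrite hu hA0 expr0 mulr1 => /(_ erefl).
  have E : (1 - lam) * v0 + phiY y + lam * a =
    (1 - lam) * (v0 + phiY y - (a + phiY y)) + (a + phiY y) by ring.
  rewrite E; apply => t; rewrite hu; apply: ler_wpM2l => //.
  by rewrite lerD2r (andP (hA _)).1.
have hs' : series (fun t => - disc_term sX cY phi lam t) @ \oo --> (0 : R).
  have -> : series (fun t => - disc_term sX cY phi lam t) =
            (fun n => - series (disc_term sX cY phi lam) n).
    by apply: boolp.funext => n; rewrite /series /= sumrN.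
  by rewrite -oppr0; apply: cvgN.
have := @lim_lower lam (fun t => - disc_term sX cY phi lam t)
   (- (v0 + phiY y)) (- (b + phiY y)) l0 l1 hs'.
rewrite /= hu hA0 expr0 mulr1 mulrN => /(_ erefl).
have E : (1 - lam) * v0 + phiY y + lam * b =
  - ((1 - lam) * (- (v0 + phiY y) - - (b + phiY y)) + - (b + phiY y)) by ring.
rewrite E oppr_ge0; apply => t; rewrite hu mulrN lerN2; apply: ler_wpM2l => //.
by rewrite lerD2r (andP (hA _)).2.
Qed.


Lemma shX_reactive q (s0 : SX -> R) (s : SY -> SX -> R) :
  shX q (reactive s0 s) = reactive (s q.2) s.
Proof. by apply: boolp.funext => -[|p h]. Qed.

Lemma pair_marg (p : SX -> R) (q : SY -> R) (G : SY -> R) : is_dist p ->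
  \sum_(r : SX * SY) p r.1 * q r.2 * G r.2 = \sum_y q y * G y.
Proof.
move=> [_ hp]; rewrite -(pair_big predT predT (fun x y => p x * q y * G y)) /=.
under eq_bigr do under eq_bigr do rewrite -mulrA.
under eq_bigr do rewrite -big_distrr.
by rewrite /= -big_distrl /= hp mul1r.
Qed.

Lemma react_rec (phiX : SX -> R) (phiY : SY -> R) (lam k : R)
  (s : SY -> SX -> R) : (forall y, is_dist (s y)) ->
  (forall y, lam * (\sum_x s y x * phiX x) + phiY y = k) ->
  forall t (s0 : SX -> R) (sY : stratY R SX SY), is_dist s0 -> is_stratY sY ->
  lam * Et (reactive s0 s) sY t.+1 (FA phiX) =
  k - Et (reactive s0 s) sY t (FB phiY).
Proof.
move=> hs hk; elim => [|t IH] s0 sY h0 hY.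
  rewrite EtS Et0; under eq_bigr do rewrite Et0.
  rewrite big_distrr /=.
  transitivity (\sum_(r : SX * SY) s0 r.1 * sY [::] r.2 * (k - phiY r.2)).
    apply: eq_bigr => q _; rewrite /FA /shX /=.
    rewrite -(hk q.2); ring.
  rewrite (@pair_marg s0 (sY [::]) (fun y => k - phiY y) h0) /FB.
  have [_ hq] := hY [::].
  rewrite -[X in X - _]mulr1 -hq big_distrr -sumrB /=.
  by apply: eq_bigr => y _; ring.
rewrite EtS [in RHS]EtS big_distrr /=.
transitivity (\sum_(r : SX * SY) s0 r.1 * sY [::] r.2 *
   (k - Et (shX r (reactive s0 s)) (shY r sY) t (FB phiY))).
  apply: eq_bigr => q _; rewrite mulrCA; congr (_ * _).
  rewrite shX_reactive IH //; last by move=> h; exact: hY.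
have hw := @wsum1 s0 (sY [::]) h0 (hY [::]).
rewrite -[X in X - _]mulr1 -hw big_distrr -sumrB /=.
by apply: eq_bigr => q _; ring.
Qed.


Lemma sufficiency (phiX : SX -> R) (phiY : SY -> R) (phi : SX -> SY -> R)
  (lam k : R) (s0 : SX -> R) (s : SY -> SX -> R) :
  0 <= lam -> lam < 1 -> (forall x y, phi x y = phiX x + phiY y) ->
  is_dist s0 -> (forall y, is_dist (s y)) ->
  k = - ((1 - lam) * \sum_x s0 x * phiX x) ->
  (forall y, lam * (\sum_x s y x * phiX x) + phiY y = k) ->
  autocratic phi lam (reactive s0 s).
Proof.
move=> l0 l1 hphi h0 hs hkv hk sY hY.
set r := reactive s0 s.
have hr : is_stratX r by move=> -[|p h] //=.
pose A t := Et r sY t (FA phiX).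
pose B t := Et r sY t (FB phiY).
have hrec : forall t, lam * A t.+1 = k - B t.
  by move=> t; exact: (@react_rec phiX phiY lam k s hs hk t s0 sY h0 hY).
have hdt : forall t, disc_term r sY phi lam t = (1 - lam) * lam ^+ t * (A t + B t).
  by move=> t; rewrite /disc_term (@stage_split phiX phiY phi r sY t hr hY hphi).
have hA0 : A 0%N = \sum_x s0 x * phiX x by rewrite /A Et0.
have key : forall N, series (disc_term r sY phi lam) N.+1 =
    lam ^+ N * (- k + (1 - lam) * B N).
  elim => [|N IH].
    rewrite series_S series_0 add0r hdt hA0 hkv expr0; ring.
  rewrite series_S IH hdt exprS.
  have -> : (1 - lam) * (lam * lam ^+ N) * (A N.+1 + B N.+1) =
    (1 - lam) * lam ^+ N * (lam * A N.+1) + (1 - lam) * (lam * lam ^+ N) * B N.+1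
    by ring.
  rewrite hrec; ring.
pose Kb := \sum_y `|phiY y|.
have hKb : forall y, `|phiY y| <= Kb.
  move=> y; rewrite /Kb (bigD1 y) //= lerDl sumr_ge0 // => *; exact: normr_ge0.
have hB : forall N, `|B N| <= Kb.
  move=> N; rewrite ler_norml; apply: Et_bound => // h; rewrite /FB.
  have [q0 q1] := hY h; apply: convex_bound => // y.
  by rewrite -ler_norml.
have hg : (fun N => series (disc_term r sY phi lam) N.+1) @ \oo --> (0 : R).
  have -> : (fun N => series (disc_term r sY phi lam) N.+1) =
     (fun N => lam ^+ N * (- k + (1 - lam) * B N)).
    by apply: boolp.funext => N; exact: key.
  apply: (@geom_bound_cvg lam (`|k| + Kb)) => // N.
  apply: (le_trans (ler_normD _ _)); rewrite normrN lerD2l normrM.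
  rewrite ger0_norm; last by rewrite subr_ge0 ltW.
  apply: (le_trans _ (hB N)).
  by apply: ler_piMl; [exact: normr_ge0 | rewrite gerBl].
by move: hg; rewrite (cvg_shiftS (series _)).
Qed.

Lemma delta_sumT (T : finType) (y : T) (f : T -> R) :
  \sum_x (x == y)%:R * f x = f y.
Proof.
rewrite (bigD1 y) //= eqxx mul1r big1 ?addr0 // => y' /negbTE ->.
by rewrite mul0r.
Qed.

Definition mixd (a b : R) (xmin xmax : SX) (t : R) : SX -> R :=
  fun x => (t - a) / (b - a) * (x == xmax)%:R +
           (1 - (t - a) / (b - a)) * (x == xmin)%:R.

Lemma mixd_sum a b xmin xmax t (g : SX -> R) :
  \sum_x mixd a b xmin xmax t x * g x =
  (t - a) / (b - a) * g xmax + (1 - (t - a) / (b - a)) * g xmin.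
Proof.
rewrite /mixd; under eq_bigr do rewrite mulrDl -!mulrA.
Proof.
rewrite /mixd; set th := (t - a) / (b - a).
transitivity (\sum_x (th * ((x == xmax)%:R * g x) + (1 - th) * ((x == xmin)%:R * g x))).
  by apply: eq_bigr => x _ /=; rewrite /th !mulrA.
by rewrite big_split /= -!big_distrr /= !delta_sumT.
Qed.

Lemma mixd_ok (phiX : SX -> R) xmin xmax t :
  phiX xmin <= t <= phiX xmax ->
  is_dist (mixd (phiX xmin) (phiX xmax) xmin xmax t) /\
  \sum_x mixd (phiX xmin) (phiX xmax) xmin xmax t x * phiX x = t.
Proof.
set a := phiX xmin; set b := phiX xmax.
move=> /andP[ha hb].
have hab : a <= b by apply: le_trans hb.
set th := (t - a) / (b - a).
have [th0 th1] : 0 <= th /\ th <= 1.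
  case: (ltrP a b) => hlt.
    rewrite /th divr_ge0 ?subr_ge0 // ler_pdivrMr ?subr_gt0 // mul1r.
    by split => //; rewrite lerD2r.
  rewrite /th; have -> : b - a = 0 by apply/eqP; rewrite subr_eq0 eq_le hlt hab.
  by rewrite invr0 mulr0.
split; first split.
- move=> x; rewrite /mixd -/th; apply: addr_ge0; apply: mulr_ge0 => //.
  by rewrite subr_ge0.
- have E := mixd_sum a b xmin xmax t (fun=> 1).
  rewrite /= !mulr1 -/th addrC subrK in E; rewrite -E.
  by apply: eq_bigr => x _; rewrite mulr1.
rewrite mixd_sum -/th -/a -/b.
case: (ltrP a b) => hlt.
  rewrite /th; field; by rewrite subr_eq0 gt_eqF.
have eab : a = b by apply/eqP; rewrite eq_le hlt hab.
have et : t = a by apply/eqP; rewrite eq_le ha andbT eab hb.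
by rewrite /th et eab subrr !mul0r subr0 mul1r add0r.
Qed.

End Aux.

Theorem theorem2 (R : realType) (SX SY : finType)
  (lam : R) (phi : SX -> SY -> R) :
  (0 < #|SX|)%N -> (0 < #|SY|)%N ->
  0 <= lam -> lam < 1 ->
  additive_game phi ->
  enforceable phi lam ->
  exists (s0 : SX -> R) (s : SY -> SX -> R),
    is_dist s0 /\ (forall y, is_dist (s y)) /\
    autocratic phi lam (reactive s0 s).
Proof.
move=> hSX hSY l0 l1 [phiX [phiY hphi]] [sX [hX aut]].
case/card_gt0P: hSX => x0 _.
case: (@arg_minP _ _ SX x0 predT phiX isT) => xmin _ Hmin.
case: (@arg_maxP _ _ SX x0 predT phiX isT) => xmax _ Hmax.
set a := phiX xmin; set b := phiX xmax.
have hab : forall x, a <= phiX x <= b.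
  by move=> x; apply/andP; split; [exact: Hmin | exact: Hmax].
set s0 := sX [::].
set v := \sum_x s0 x * phiX x.
set k := - ((1 - lam) * v).
have N := fun y => @necessity R SX SY phiX phiY phi lam sX a b y l0 l1 hphi hab hX aut.
case: (eqVneq lam 0) => hl.
  exists s0, (fun _ => s0); split; first exact: hX.
  split; first by move=> _; exact: hX.
  apply: (@sufficiency R SX SY phiX phiY phi lam k s0 (fun=> s0) l0 l1 hphi
     (hX [::]) (fun=> hX [::]) erefl) => y.
  have [n1 n2] := N y; rewrite -/s0 -/v hl in n1 n2 *.
  rewrite /k hl; lra.
have hpos : 0 < lam by rewrite lt_def hl l0.
pose ty y := (k - phiY y) / lam.
have hty : forall y, a <= ty y <= b.
  move=> y; rewrite /ty ler_pdivlMr // ler_pdivrMr //.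
  have [n1 n2] := N y; rewrite -/s0 -/v in n1 n2.
  apply/andP; split; rewrite /k; lra.
exists s0, (fun y => @mixd R SX a b xmin xmax (ty y)); split; first exact: hX.
split; first by move=> y; exact: (@mixd_ok R SX phiX xmin xmax _ (hty y)).1.
apply: (@sufficiency R SX SY phiX phiY phi lam k s0 _ l0 l1 hphi
     (hX [::]) (fun y => (@mixd_ok R SX phiX xmin xmax _ (hty y)).1) erefl) => y.
rewrite (@mixd_ok R SX phiX xmin xmax _ (hty y)).2 /ty mulrC divfK ?subrK //.
Qed.
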